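(* Let $n\in\mathbb{N}$, let $m\leqslant n$, let $\alpha_k>0$ and $\beta_k>0$ for $k=1,\ldots,m$, and let $0\leqslant\varphi_1<\ldots<\varphi_m<2\pi$. Put \[ h(z)\coloneq\sum_{k=1}^m\alpha_k\frac{1+e^{i\varphi_k}z}{1-e^{i\varphi_k}z},\qquad f\coloneq e^{-h},\qquad g(z)\coloneq\sum_{k=1}^m\beta_k\frac{1+e^{i\varphi_k}z}{1-e^{i\varphi_k}z}, \] and let $H(z)\coloneq\{f\}_n+2\{f\}_{n-1}z+2\{f\}_{n-2}z^2+\ldots+2\{f\}_0z^n$. Assume that $\operatorname{Re}H(z)>0$ for all $z\in\Delta$. Then \[ \operatorname{Re}\bigl(\{f\}_n\{g\}_0+\{f\}_{n-1}\{g\}_1+\ldots+\{f\}_0\{g\}_n\bigr)=0 \] holds if and only if $\operatorname{Re}H(e^{i\varphi_k})=0$ for all $k=1,\ldots,m$.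
   Context: $\Delta=\{z\in\mathbb{C}:|z|<1\}$ is the open unit disk. For a function $f$ holomorphic in $\Delta$, $\{f\}_j$ denotes its $j$-th Taylor coefficient at $0$, i.e. $f(z)=\sum_{j\geqslant0}\{f\}_jz^j$. *)

(* Defs.v *)
From HB Require Import structures.
From mathcomp Require Import all_boot all_order all_algebra.
From mathcomp Require Import all_classical all_reals all_analysis.
From mathcomp Require Import complex.
Set Implicit Arguments.
Unset Strict Implicit.
Unset Printing Implicit Defensive.
Import Order.TTheory GRing.Theory Num.Theory.
Import numFieldNormedType.Exports.
Local Open Scope ring_scope.
Local Open Scope classical_set_scope.
Local Open Scope complex_scope.

Definition cabs (R : realType) (z : R[i]) : R := ComplexField.Normc.normc z.

Definition expi (R : realType) (x : R) : R[i] := cos x +i* sin x.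

Definition expC (R : realType) (w : R[i]) : R[i] :=
  (expR (complex.Re w))%:C * expi (complex.Im w).

Definition taylor_coefs (R : realType) (F : R[i] -> R[i]) (c : nat -> R[i]) :
  Prop :=
  forall z : R[i], cabs z < 1 ->
    (fun N => cabs (\sum_(j < N) c j * z ^+ j - F z)) @ \oo --> (0 : R).

Definition herglotz_sum (R : realType) (m : nat) (a phi : 'I_m -> R)
  (z : R[i]) : R[i] :=
  \sum_(k < m) (a k)%:C * ((1 + expi (phi k) * z) / (1 - expi (phi k) * z)).

Definition Hpoly (R : realType) (n : nat) (cf : nat -> R[i]) (z : R[i]) : R[i] :=
  cf n + \sum_(1 <= j < n.+1) 2%:R * cf (n - j)%N * z ^+ j.

(* Main.v *)
Require Import Defs.
From HB Require Import structures.
From mathcomp Require Import all_boot all_order all_algebra.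
From mathcomp Require Import all_classical all_reals all_analysis.
From mathcomp Require Import complex.
From mathcomp Require Import ring lra.
Import Order.TTheory GRing.Theory Num.Theory.
Import numFieldNormedType.Exports.
Local Open Scope ring_scope.
Local Open Scope classical_set_scope.
Local Open Scope complex_scope.

Section Tools.
Variable R : realType.
Implicit Types x y z w : R[i].

Definition cvz (u : nat -> R) :=
  forall e : R, 0 < e -> exists N, forall n, (N <= n)%N -> `|u n| < e.

Lemma cvzP (u : nat -> R) : u @ \oo --> (0:R) <-> cvz u.
Proof.
rewrite cvgr0Pnorm_lt; split => H e /H.
  by case => N _ HN; exists N => n /HN.
by case => N HN; exists N.
Qed.

Lemma cabs_ge0 z : 0 <= cabs z.
Proof. by case: z => a b; rewrite /cabs /= sqrtr_ge0. Qed.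

Lemma cabsD x y : cabs (x + y) <= cabs x + cabs y.
Proof. exact: le_normcD. Qed.

Lemma cabsM x y : cabs (x * y) = cabs x * cabs y.
Proof. exact: ComplexField.Normc.normcM. Qed.

Lemma cabsN x : cabs (- x) = cabs x.
Proof. exact: normcN. Qed.

Lemma cabsV x : cabs (x^-1) = (cabs x)^-1.
Proof. exact: ComplexField.Normc.normcV. Qed.

Lemma cabsB x y : cabs (x - y) <= cabs x + cabs y.
Proof. by rewrite -(cabsN y) cabsD. Qed.

Lemma cabs0 : cabs (0 : R[i]) = 0.
Proof. exact: ComplexField.Normc.normc0. Qed.

Lemma cabs1 : cabs (1 : R[i]) = 1.
Proof. exact: ComplexField.Normc.normc1. Qed.

Lemma cabs_eq0 x : cabs x = 0 -> x = 0.
Proof. exact: ComplexField.Normc.eq0_normc. Qed.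

Lemma cabsX x j : cabs (x ^+ j) = cabs x ^+ j.
Proof. by elim: j => [|j IH]; rewrite ?expr0 ?cabs1 // !exprS cabsM IH. Qed.

Lemma cabsR (t : R) : cabs t%:C = `|t|.
Proof. by rewrite /cabs /= expr0n /= addr0 sqrtr_sqr. Qed.

Lemma Re_le_cabs z : `|complex.Re z| <= cabs z.
Proof.
case: z => a b; rewrite /cabs /= -sqrtr_sqr ler_wsqrtr //.
by rewrite lerDl sqr_ge0.
Qed.

Lemma cabs_expi (t : R) : cabs (expi t) = 1.
Proof. by rewrite /cabs /expi /= cos2Dsin2 sqrtr1. Qed.

Lemma cabs_sum (I : Type) (r : seq I) (P : pred I) (F : I -> R[i]) :
  cabs (\sum_(i <- r | P i) F i) <= \sum_(i <- r | P i) cabs (F i).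
Proof.
elim/big_ind2 : _ => //; first by rewrite cabs0.
move=> x1 y1 x2 y2 h1 h2; apply: le_trans (cabsD _ _) _; exact: lerD.
Qed.

Lemma cabs_sumo N (F : 'I_N -> R[i]) :
  cabs (\sum_(i < N) F i) <= \sum_(i < N) cabs (F i).
Proof.
elim/big_ind2 : _ => //; first by rewrite cabs0.
move=> x1 y1 x2 y2 h1 h2; apply: le_trans (cabsD _ _) _; exact: lerD.
Qed.

Lemma geo_bound (x : R) K : 0 <= x -> 2 * x <= 1 ->
  \sum_(j < K) x ^+ j <= 2 - 2 * x ^+ K.
Proof.
move=> x0 x1; elim: K => [|K IH]; first by rewrite big_ord0 expr0; lra.
rewrite big_ord_recr /= exprSr.
have y0 : 0 <= x ^+ K by rewrite exprn_ge0.
nra.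
Qed.

Definition psum (a : nat -> R[i]) (t : R) N := \sum_(j < N) a j * t%:C ^+ j.

Definition Hyp (a : nat -> R[i]) :=
  forall t : R, 0 < t -> t < 1 -> cvz (fun N => cabs (psum a t N)).

Lemma cabs_tpow (t : R) j : 0 <= t -> cabs (t%:C ^+ j) = t ^+ j.
Proof. by move=> t0; rewrite cabsX cabsR ger0_norm. Qed.

Lemma coef0_eq0 a : Hyp a -> a 0%N = 0.
Proof.
move=> H.
pose q : R := 2^-1.
have q0 : 0 < q by rewrite /q invr_gt0.
have q1 : q < 1 by rewrite /q invf_lt1 // ltr1n.
have [M M0 HM] : exists2 M : R, 0 < M & forall j, cabs (a j) * q ^+ j <= M.
  have [N0 HN0] := H q q0 q1 1 ltr01.
  have S0 : forall P : pred 'I_N0, 0 <= \sum_(i < N0 | P i) cabs (a i) * q ^+ i.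
    by move=> P; apply: sumr_ge0 => i _; rewrite mulr_ge0 ?cabs_ge0 // exprn_ge0 // ltW.
  exists (2 + \sum_(i < N0) cabs (a i) * q ^+ i).
    by have := S0 predT; lra.
  move=> j; case: (ltnP j N0) => hj.
    rewrite (bigD1 (Ordinal hj)) //=.
    have := S0 (fun i => i != Ordinal hj); lra.
  have e1 : a j * q%:C ^+ j = psum a q j.+1 - psum a q j.
    by rewrite /psum big_ord_recr /= addrC addrK.
  have := cabsB (psum a q j.+1) (psum a q j).
  rewrite -e1 cabsM cabs_tpow; last exact: ltW.
  have := HN0 j.+1 (leqW hj); have := HN0 j hj.
  rewrite !ger0_norm ?cabs_ge0 // => h1 h2 h3.
  have := S0 predT; lra.
have key : forall t : R, 0 < t -> 4 * t <= 1 -> forall N,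
    cabs (a 0%N) <= cabs (psum a t N.+1) + 4 * M * t.
  move=> t t0 t1 N.
  have eS : psum a t N.+1 = a 0%N + \sum_(i < N) a i.+1 * t%:C ^+ i.+1.
    by rewrite /psum big_ord_recl /= expr0 mulr1.
  have hT : cabs (\sum_(i < N) a i.+1 * t%:C ^+ i.+1) <= 4 * M * t.
    apply: le_trans (cabs_sumo _ _) _.
    apply: (@le_trans _ _ (\sum_(i < N) M * (2 * t) * (2 * t) ^+ i)).
      apply: ler_sum => i _.
      rewrite cabsM cabs_tpow; last exact: ltW.
      have -> : t ^+ i.+1 = q ^+ i.+1 * (2 * t) ^+ i.+1.
        by rewrite -exprMn; congr (_ ^+ _); rewrite /q mulrA mulVf ?mul1r // pnatr_eq0.
      have p0 : 0 <= (2 * t) ^+ i.+1 by rewrite exprn_ge0 //; lra.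
      rewrite [cabs _ * _]mulrA (le_trans (ler_wpM2r p0 (HM i.+1))) //.
      by rewrite exprS -!mulrA lexx.
    rewrite -mulr_sumr.
    have := geo_bound (2 * t) N.
    have hx : 0 <= (2 * t) ^+ N by rewrite exprn_ge0 //; lra.
    move=> h; have {h} h := h ltac:(lra) ltac:(lra).
    have hMt : 0 <= M * (2 * t) by rewrite mulr_ge0 //; lra.
    apply: le_trans (ler_wpM2l hMt h) _.
    nra.
  have : a 0%N = psum a t N.+1 - \sum_(i < N) a i.+1 * t%:C ^+ i.+1.
    by rewrite eS addrK.
  move=> ->; apply: le_trans (cabsB _ _) _; exact: lerD.
apply: cabs_eq0; apply/eqP; rewrite eq_le cabs_ge0 andbT; apply/negP => /negP.
rewrite -ltNge => e0.
set e := cabs (a 0%N) in e0 key.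
pose t := e / (8 * (M + e)).
have hte : t * (8 * (M + e)) = e by rewrite /t mulfVK // mulf_neq0 // ?pnatr_eq0 //; lra.
have t0 : 0 < t by rewrite /t divr_gt0 //; lra.
have t1 : t < 1 by nra.
have t4 : 4 * t <= 1 by nra.
have [N HN] := H t t0 t1 (e / 2) ltac:(lra).
have := HN N.+1 (leqnSn N); rewrite ger0_norm ?cabs_ge0 // => h.
have := key t t0 t4 N.
nra.
Qed.

Lemma shift_hyp a : a 0%N = 0 -> Hyp a -> Hyp (fun j => a j.+1).
Proof.
move=> a0 H t t0 t1 e e0.
have [N HN] := H t t0 t1 (e * t) (mulr_gt0 e0 t0).
exists N => n hn.
have eS : psum a t n.+1 = t%:C * psum (fun j => a j.+1) t n.
  rewrite /psum big_ord_recl /= a0 mul0r add0r mulr_sumr.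
  by apply: eq_bigr => i _; rewrite exprS mulrCA.
have := HN n.+1 (leqW hn); rewrite eS cabsM cabsR !ger0_norm ?mulr_ge0 ?cabs_ge0 //;
  try exact: ltW.
by rewrite mulrC ltr_pM2r.
Qed.

Lemma hyp_zero a : Hyp a -> forall j, a j = 0.
Proof.
move=> H j; elim: j a H => [|j IH] a H; first exact: coef0_eq0.
apply: (IH (fun j => a j.+1)); apply: shift_hyp => //; exact: coef0_eq0.
Qed.

End Tools.

Arguments cabs_ge0 {R}. Arguments cabsD {R}. Arguments cabsM {R}. Arguments cabsN {R}.
Arguments cabsV {R}. Arguments cabsB {R}. Arguments cabs0 {R}. Arguments cabs1 {R}.
Arguments cabs_eq0 {R}. Arguments cabsX {R}. Arguments cabsR {R}. Arguments Re_le_cabs {R}.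
Arguments cabs_expi {R}. Arguments cabs_sum {R}. Arguments cabs_sumo {R}.
Arguments cvzP {R}. Arguments hyp_zero {R}. Arguments psum {R}. Arguments cvz {R}.

Section Part2.
Variable R : realType.

Lemma cabs_sums (r : seq nat) (F : nat -> R[i]) :
  cabs (\sum_(i <- r) F i) <= \sum_(i <- r) cabs (F i).
Proof.
elim/big_ind2 : _ => //; first by rewrite cabs0.
move=> x1 y1 x2 y2 h1 h2; apply: le_trans (cabsD _ _) _; exact: lerD.
Qed.

Lemma ReDc (x y : R[i]) : complex.Re (x + y) = complex.Re x + complex.Re y.
Proof. by case: x; case: y. Qed.

Lemma ReMrc (b : R) (x : R[i]) : complex.Re (b%:C * x) = b * complex.Re x.
Proof. by case: x => x1 x2 /=; rewrite mul0r subr0. Qed.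

Lemma Re_sumM m (b : 'I_m -> R) (X : 'I_m -> R[i]) :
  complex.Re (\sum_(k < m) (b k)%:C * X k) = \sum_(k < m) b k * complex.Re (X k).
Proof.
elim/big_rec2: _ => [|k y1 y2 _ IH]; first by [].
by rewrite ReDc ReMrc IH.
Qed.

Definition cterm (e : R[i]) (j : nat) : R[i] := if j is 0 then 1 else 2%:R * e ^+ j.

Definition dcoef m (beta phi : 'I_m -> R) (j : nat) : R[i] :=
  \sum_(k < m) (beta k)%:C * cterm (expi (phi k)) j.
Arguments dcoef {m}.

Lemma cterm_mul e z j : cterm e j * z ^+ j = cterm (e * z) j.
Proof. by case: j => [|j] /=; rewrite ?expr0 ?mulr1 // -mulrA exprMn. Qed.

Lemma geoC (w : R[i]) N : (1 - w) * \sum_(j < N) w ^+ j = 1 - w ^+ N.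
Proof.
elim: N => [|N IH]; first by rewrite big_ord0 mulr0 expr0 subrr.
by rewrite big_ord_recr /= mulrDr IH exprSr; ring.
Qed.

Lemma herg_err (w : R[i]) N : 1 - w != 0 ->
  \sum_(j < N.+1) cterm w j - (1 + w) / (1 - w) = - (2%:R * w ^+ N.+1) / (1 - w).
Proof.
move=> h.
rewrite big_ord_recl /=.
have -> : \sum_(i < N) cterm w i.+1 = 2%:R * w * \sum_(i < N) w ^+ i.
  rewrite mulr_sumr; apply: eq_bigr => i _ /=; rewrite exprS; ring.
have eS : \sum_(i < N) w ^+ i = (1 - w ^+ N) / (1 - w).
  by rewrite -geoC mulrC mulKf.
rewrite eS exprS; field; exact: h.
Qed.

Lemma herg_bound m (beta phi : 'I_m -> R) (z : R[i]) N : cabs z < 1 ->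
  cabs (\sum_(j < N.+1) dcoef beta phi j * z ^+ j - herglotz_sum beta phi z)
  <= (\sum_(k < m) `|beta k| * 2 / cabs (1 - expi (phi k) * z)) * cabs z ^+ N.+1.
Proof.
move=> hz.
have hw : forall k, 1 - expi (phi k) * z != 0.
  move=> k; apply/negP => /eqP h0.
  have : expi (phi k) * z = 1 by apply/eqP; rewrite -subr_eq0 -oppr_eq0 opprB h0.
  move=> /(congr1 (@cabs R)); rewrite cabsM cabs_expi mul1r cabs1 => h1.
  by move: hz; rewrite h1 ltxx.
have -> : \sum_(j < N.+1) dcoef beta phi j * z ^+ j =
    \sum_(k < m) (beta k)%:C * \sum_(j < N.+1) cterm (expi (phi k) * z) j.
  rewrite /dcoef.
  under eq_bigr do rewrite mulr_suml.
  rewrite exchange_big /=; apply: eq_bigr => k _.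
  rewrite mulr_sumr; apply: eq_bigr => j _.
  by rewrite -mulrA cterm_mul.
rewrite /herglotz_sum -sumrB.
under eq_bigr do rewrite -mulrBr herg_err ?hw //.
apply: le_trans (cabs_sumo _ _) _.
rewrite mulr_suml; apply: ler_sum => k _.
rewrite cabsM cabsR mulNr cabsN cabsM cabsV cabsM cabsX cabsM cabs_expi mul1r.
have -> : cabs (2%:R : R[i]) = 2.
  have -> : (2%:R : R[i]) = (2 : R)%:C by rewrite rmorph_nat.
  by rewrite cabsR ger0_norm.
rewrite le_eqVlt; apply/orP; left; apply/eqP; field.
apply/negP => /eqP /cabs_eq0 /eqP; exact/negP/hw.
Qed.
Arguments herg_bound {m}.

Lemma cvz_le (u v w : nat -> R) : (forall n, `|w n| <= `|u n| + `|v n|) ->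
  cvz u -> cvz v -> cvz w.
Proof.
move=> H hu hv e e0.
have [N1 H1] := hu (e / 2) ltac:(lra).
have [N2 H2] := hv (e / 2) ltac:(lra).
exists (maxn N1 N2) => n hn.
have h1 := H1 n (leq_trans (leq_maxl _ _) hn).
have h2 := H2 n (leq_trans (leq_maxr _ _) hn).
have := H n; lra.
Qed.

Lemma herg_conv m (beta phi : 'I_m -> R) (z : R[i]) : cabs z < 1 ->
  cvz (fun N => cabs (\sum_(j < N) dcoef beta phi j * z ^+ j - herglotz_sum beta phi z)).
Proof.
move=> hz e e0.
set C := \sum_(k < m) `|beta k| * 2 / cabs (1 - expi (phi k) * z).
have C0 : 0 <= C.
  apply: sumr_ge0 => k _; rewrite divr_ge0 ?cabs_ge0 // mulr_ge0 //.
have hr : `|cabs z| < 1 by rewrite ger0_norm ?cabs_ge0.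
have /cvzP hc := cvg_expr hr.
have [N0 HN0] := hc (e / (C + 1)) ltac:(apply: divr_gt0 => //; lra).
exists N0.+1 => -[//|n] hn.
have := HN0 n.+1 (ltnW hn); rewrite ger0_norm ?exprn_ge0 ?cabs_ge0 //.
rewrite ltr_pdivlMr; last lra.
have := herg_bound beta phi z n hz; rewrite -/C.
have : 0 <= cabs z ^+ n.+1 by rewrite exprn_ge0 ?cabs_ge0.
rewrite ger0_norm ?cabs_ge0 //.
nra.
Qed.

End Part2.

Arguments cabs_ge0 {R}. Arguments cabsD {R}. Arguments cabsM {R}. Arguments cabsN {R}.
Arguments cabsV {R}. Arguments cabsB {R}. Arguments cabs0 {R}. Arguments cabs1 {R}.
Arguments cabs_eq0 {R}. Arguments cabsX {R}. Arguments cabsR {R}. Arguments Re_le_cabs {R}.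
Arguments cabs_expi {R}. Arguments cabs_sum {R}. Arguments cabs_sumo {R}.
Arguments cvzP {R}. Arguments hyp_zero {R}. Arguments psum {R}. Arguments cvz {R}.
Arguments cabs_sums {R}. Arguments ReDc {R}. Arguments ReMrc {R}. Arguments Re_sumM {R}.
Arguments cterm {R}. Arguments dcoef {_ _}. Arguments herg_conv {_ _}. Arguments cvz_le {R}.

Section Part3.
Variable R : realType.

Lemma Hsum n (cf : nat -> R[i]) (e : R[i]) :
  \sum_(j < n.+1) cf (n - j)%N * cterm e j = Hpoly n cf e.
Proof.
rewrite big_ord_recl /= subn0 mulr1 /Hpoly big_add1 /= big_mkord; congr (_ + _).
by apply: eq_bigr => i _ /=; ring.
Qed.

Lemma pow_bound (r : R) j : 0 <= r -> r <= 1 -> 1 - r ^+ j <= j%:R * (1 - r).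
Proof.
move=> r0 r1; elim: j => [|j IH]; first by rewrite expr0 mul0r subrr.
have y0 : 0 <= r ^+ j by rewrite exprn_ge0.
have y1 : r ^+ j <= 1 by rewrite exprn_ile1.
rewrite exprS -natr1; nra.
Qed.

Lemma ReH_ge0 n (cf : nat -> R[i]) (w : R[i]) : cabs w = 1 ->
  (forall z : R[i], cabs z < 1 -> 0 < complex.Re (Hpoly n cf z)) ->
  0 <= complex.Re (Hpoly n cf w).
Proof.
move=> hw H; rewrite leNgt; apply/negP => hneg.
set d := - complex.Re (Hpoly n cf w).
have d0 : 0 < d by rewrite /d oppr_gt0.
set C := \sum_(1 <= j < n.+1) cabs (2%:R * cf (n - j)%N) * j%:R.
have C0 : 0 <= C by apply: sumr_ge0 => j _; rewrite mulr_ge0 ?cabs_ge0 // ler0n.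
have bnd : forall r : R, 0 <= r -> r <= 1 ->
    cabs (Hpoly n cf (r%:C * w) - Hpoly n cf w) <= (1 - r) * C.
  move=> r r0 r1.
  rewrite /Hpoly opprD addrACA subrr add0r -sumrB.
  apply: le_trans (cabs_sums _ _) _.
  rewrite /C mulr_sumr; apply: ler_sum => j _.
  have -> : 2%:R * cf (n - j)%N * (r%:C * w) ^+ j - 2%:R * cf (n - j)%N * w ^+ j
      = (2%:R * cf (n - j)%N) * w ^+ j * (r ^+ j - 1)%:C.
    by rewrite exprMn rmorphB rmorphXn rmorph1 /=; ring.
  set A := (2%:R * cf (n - j)%N).
  rewrite !cabsM cabsX hw expr1n mulr1 cabsR ler0_norm; last first.
    by rewrite subr_le0 exprn_ile1.
  have := pow_bound r j r0 r1.
  have hB : 0 <= cabs (2%:R : R[i]) * cabs (cf (n - j)%N) by rewrite mulr_ge0 ?cabs_ge0.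
  move: (cabs (2%:R : R[i]) * cabs (cf (n - j)%N)) hB => B hB.
  nra.
set s := d / (2 * (C + d)).
have hs : s * (2 * (C + d)) = d by rewrite /s mulfVK // mulf_neq0 // ?pnatr_eq0 //; lra.
have s0 : 0 < s by rewrite /s divr_gt0 //; lra.
have s1 : s <= 2^-1 by nra.
have hz : cabs ((1 - s)%:C * w) < 1.
  by rewrite cabsM hw mulr1 cabsR ger0_norm; lra.
have := H _ hz.
have := bnd (1 - s) ltac:(lra) ltac:(lra).
idtac.
have := Re_le_cabs (Hpoly n cf ((1 - s)%:C * w) - Hpoly n cf w).
have -> : complex.Re (Hpoly n cf ((1 - s)%:C * w)) =
   complex.Re (Hpoly n cf ((1 - s)%:C * w) - Hpoly n cf w) + complex.Re (Hpoly n cf w).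
  by rewrite -ReDc subrK.
move: (complex.Re (Hpoly n cf ((1 - s)%:C * w) - Hpoly n cf w)) => x.
move=> h1 h2 h3.
have h4 := ler_norm x.
have dd : complex.Re (Hpoly n cf w) = - d by rewrite /d opprK.
rewrite dd in h3.
have hsd : 0 < s * d by rewrite mulr_gt0.
have hsC : 0 <= s * C by rewrite mulr_ge0 // ltW.
move: (cabs (Hpoly n cf ((1 - s)%:C * w) - Hpoly n cf w)) h1 h2 => y h1 h2.
clearbody d s C.
nra.
Qed.

End Part3.

Local Close Scope classical_set_scope.

Theorem theorem3 (R : realType) (n m : nat) (alpha beta phi : 'I_m -> R)
  (cf cg : nat -> R[i]) :
  (m <= n)%N ->
  (forall k, 0 < alpha k) ->
  (forall k, 0 < beta k) ->
  (forall k, 0 <= phi k /\ phi k < 2 * pi) ->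
  (forall k l : 'I_m, (k < l)%N -> phi k < phi l) ->
  taylor_coefs (fun z => expC (- herglotz_sum alpha phi z)) cf ->
  taylor_coefs (herglotz_sum beta phi) cg ->
  (forall z : R[i], cabs z < 1 -> 0 < complex.Re (Hpoly n cf z)) ->
  (complex.Re (\sum_(j < n.+1) cf (n - j)%N * cg j) = 0 <->
   forall k : 'I_m, complex.Re (Hpoly n cf (expi (phi k))) = 0).
Proof.
move=> _ _ hb _ _ _ hg hH.
have ecg : forall j, cg j = dcoef beta phi j.
  move=> j; apply/eqP; rewrite -subr_eq0; apply/eqP.
  apply: (hyp_zero (fun j => cg j - dcoef beta phi j)) => t t0 t1.
  have ht : cabs t%:C < 1 by rewrite cabsR ger0_norm //; exact: ltW.
  apply: (cvz_le _ _ _ _ (proj1 (cvzP _) (hg _ ht)) (herg_conv beta phi _ ht)).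
  move=> N; rewrite /psum.
  have -> : \sum_(j < N) (cg j - dcoef beta phi j) * t%:C ^+ j =
     (\sum_(j < N) cg j * t%:C ^+ j - herglotz_sum beta phi t%:C) -
     (\sum_(j < N) dcoef beta phi j * t%:C ^+ j - herglotz_sum beta phi t%:C).
    by rewrite opprB addrA subrK -sumrB; apply: eq_bigr => i _; rewrite mulrBl.
  rewrite !ger0_norm ?cabs_ge0 //; exact: cabsB.
have -> : \sum_(j < n.+1) cf (n - j)%N * cg j =
    \sum_(k < m) (beta k)%:C * Hpoly n cf (expi (phi k)).
  under eq_bigr do rewrite ecg /dcoef mulr_sumr.
  rewrite exchange_big /=; apply: eq_bigr => k _.
  rewrite -Hsum mulr_sumr; apply: eq_bigr => j _; ring.
rewrite Re_sumM.
have hge : forall k, 0 <= beta k * complex.Re (Hpoly n cf (expi (phi k))).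
  move=> k; rewrite mulr_ge0 ?(ltW (hb k)) //.
  by apply: ReH_ge0 => //; rewrite cabs_expi.
split => [hs k | hk]; last by rewrite big1 // => k _; rewrite hk mulr0.
have : beta k * complex.Re (Hpoly n cf (expi (phi k))) = 0.
  apply/eqP; rewrite eq_le hge andbT -hs (bigD1 k) //= lerDl.
  by apply: sumr_ge0 => i _.
move/eqP; rewrite mulf_eq0 => /orP[/eqP hb0|/eqP //].
by have := hb k; rewrite hb0 ltxx.
Qed.
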